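(* Let $(D,s,t,k)$ be a reduced instance of Rooted $k$-Distinct Branchings, let $(\hat T,\{B_x\})$ be the $s$-rooted cut decomposition of $D$, and let $\hat P=x_1\dots x_\ell$ be a degenerate path of $\hat T$. If $x_iu$ and $x_ju$ are two arcs of $A^+\cap R_t$ with $i<j$ (same head $u$), then $(D,s,t,k)$ is a positive instance if and only if $(D-x_ju,s,t,k)$ is a positive instance.
   Context: Digraphs are finite and without loops; paths are directed. An out-tree (in-tree) is an oriented tree with exactly one vertex of in-degree zero (out-degree zero), its root; an out-branching (in-branching) of $D$ is a spanning out-tree (in-tree). An instance $(D,s,t,k)$ of Rooted $k$-Distinct Branchings ($D$ a digraph, $s,t\in V(D)$, $k$ an integer) is positive if $D$ has an out-branching $T^+$ rooted at $s$ and an in-branching $T^-$ rooted at $t$ with $|A(T^+)\setminus A(T^-)|\ge k$. It is reduced if $D$ has an out-branching rooted at $s$, an in-branching rooted at $t$, and every arc of $D$ lies in some out-branching rooted at $s$ or in some in-branching rooted at $t$. $R_s$ is the set of arcs lying in no out-branching rooted at $s$, and $R_t$ the set of arcs lying in no in-branching rooted at $t$. A vertex $v$ is bi-reachable from $r$ if there are two internally vertex-disjoint directed paths from $r$ to $v$. For a digraph $H$ with at least two vertices and $r\in V(H)$ such that every vertex of $H$ is reachable from $r$, the diblock $B_r$ of $r$ in $H$ is the set of all vertices bi-reachable from $r$, together with $r$ and all out-neighbours of $r$. For $x\in B_r\setminus\{r\}$ let $X_x$ be the set of vertices $v\notin B_r$ such that every directed $r$–$v$ path intersects $B_r$ for the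 last time in $x$; $x$ is a bottleneck of $B_r$ if $X_x\ne\emptyset$. The $r$-rooted cut decomposition $(\hat T,\{B_x\}_{x\in V(\hat T)})$ of $H$ is defined recursively: $\hat T$ is a rooted tree with root $r$; the set associated with the root is $B_r$; the children of $r$ are the bottlenecks of $B_r$; for each bottleneck $x$, the subtree rooted at $x$ with its sets is the $x$-rooted cut decomposition of $H[X_x\cup\{x\}]$. $B_x$ is degenerate if $x$ is an internal node of $\hat T$ and $|B_x|=2$. A path $x_1\dots x_\ell$ in $\hat T$ is degenerate if it is a subpath of a root-to-leaf path of $\hat T$ (with $x_{i+1}$ a child of $x_i$) and every $B_{x_i}$ is degenerate. For such a path $\hat P$, $A^+$ is the set of arcs $x_iu$ of $D$ with $x_i\in V(\hat P)$ and $u\notin V(\hat P)$, $u\in B_y$ for some proper ancestor $y$ of $x_1$ in $\hat T$. *)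

(* Defs.v *)
(* Digraph D = (V, A): V a finType (the vertex set V(D)),
   A : {set V * V} its arc set; an arc (x,y) goes from x to y. *)
From mathcomp Require Import all_boot.
Set Implicit Arguments. Unset Strict Implicit. Unset Printing Implicit Defensive.

Section Digraphs.
Variable V : finType.

Definition loopless (A : {set V * V}) : Prop := forall a, a \in A -> a.1 != a.2.

Definition arcrel (T : {set V * V}) : rel V := fun x y => (x, y) \in T.

Definition out_branching (A T : {set V * V}) (s : V) : Prop :=
  [/\ T \subset A,
      #|[set a in T | a.2 == s]| = 0,
      (forall v, v != s -> #|[set a in T | a.2 == v]| = 1) &
      (forall v, connect (arcrel T) s v)].

Definition in_branching (A T : {set V * V}) (t : V) : Prop :=
  [/\ T \subset A,
      #|[set a in T | a.1 == t]| = 0,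
      (forall v, v != t -> #|[set a in T | a.1 == v]| = 1) &
      (forall v, connect (arcrel T) v t)].

Definition positive (A : {set V * V}) (s t : V) (k : nat) : Prop :=
  exists Tp Tm, [/\ out_branching A Tp s, in_branching A Tm t & k <= #|Tp :\: Tm|].

Definition reduced (A : {set V * V}) (s t : V) : Prop :=
  [/\ (exists T, out_branching A T s), (exists T, in_branching A T t) &
      (forall a, a \in A ->
         (exists T, out_branching A T s /\ a \in T) \/
         (exists T, in_branching A T t /\ a \in T))].

Definition in_Rt (A : {set V * V}) (t : V) (a : V * V) : Prop :=
  a \in A /\ ~ (exists T, in_branching A T t /\ a \in T).

Definition eW (W : {set V}) (A : {set V * V}) : rel V :=
  fun x y => [&& x \in W, y \in W & (x, y) \in A].

(* a :: p is a directed path (no repeated vertices) from a to b in D[W] *)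
Definition dpath (W : {set V}) (A : {set V * V}) (a b : V) (p : seq V) : bool :=
  [&& a \in W, path (eW W A) a p, last a p == b & uniq (a :: p)].

Definition internal (p : seq V) : seq V := take (size p).-1 p.

Definition bireach (W : {set V}) (A : {set V * V}) (r v : V) : Prop :=
  exists p q, [/\ dpath W A r v p, dpath W A r v q, p != q &
                  ~~ has (fun y => y \in internal q) (internal p)].

Definition in_diblock (W : {set V}) (A : {set V * V}) (r v : V) : Prop :=
  v \in W /\ (v = r \/ eW W A r v \/ bireach W A r v).

Definition in_X (W : {set V}) (A : {set V * V}) (r : V) (Br : {set V}) (x v : V) : Prop :=
  [/\ x \in Br, x != r, v \in W, v \notin Br &
      forall p, dpath W A r v p -> last r [seq y <- p | y \in Br] = x].

(* cutdec A par B W r N : the r-rooted cut decomposition of D[W] has node set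
   N (a set of vertices), parent function par (for non-root nodes) and
   associated sets B x (for nodes x). *)
Inductive cutdec (A : {set V * V}) (par : V -> V) (B : V -> {set V}) :
    {set V} -> V -> {set V} -> Prop :=
| CutDecNode (W : {set V}) (r : V) (N : {set V}) (X Nc : V -> {set V}) :
    r \in W ->
    (forall v, v \in B r <-> in_diblock W A r v) ->
    (forall x v, v \in X x <-> in_X W A r (B r) x v) ->
    (forall x, x \in B r -> x != r -> X x != set0 ->
        par x = r /\ cutdec A par B (x |: X x) x (Nc x)) ->
    N = r |: \bigcup_(x in B r | (x != r) && (X x != set0)) Nc x ->
    cutdec A par B W r N.

Definition child (N : {set V}) (par : V -> V) (s : V) : rel V :=
  fun x y => [&& y \in N, y != s & par y == x].

Definition internal_node (N : {set V}) (par : V -> V) (s x : V) : bool :=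
  (x \in N) && [exists y, child N par s x y].

Definition proper_anc (N : {set V}) (par : V -> V) (s x y : V) : Prop :=
  exists z, child N par s z x /\ connect (fun a b => child N par s b a) z y.

Definition degenerate_path (N : {set V}) (par : V -> V) (B : V -> {set V}) (s : V)
    (x1 : V) (rest : seq V) : Prop :=
  path (child N par s) x1 rest /\
  all (fun x => internal_node N par s x && (#|B x| == 2)) (x1 :: rest).

Definition in_Aplus (A : {set V * V}) (N : {set V}) (par : V -> V) (B : V -> {set V})
    (s x1 : V) (rest : seq V) (a : V * V) : Prop :=
  [/\ a \in A, a.1 \in x1 :: rest, a.2 \notin x1 :: rest &
      exists y, proper_anc N par s x1 y /\ a.2 \in B y].

End Digraphs.

(* Main.v *)
Require Import Defs.
From mathcomp Require Import all_boot.
From Stdlib Require Import Classical.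
Set Implicit Arguments. Unset Strict Implicit. Unset Printing Implicit Defensive.

Section Aux.
Variable V : finType.
Variable A : {set V * V}.

Lemma path_inW (W : {set V}) z p : path (eW W A) z p -> {subset p <= W}.
Proof.
elim: p z => [|y p IH] z //= /andP[/and3P[_ hy _] hp] w.
rewrite inE => /orP[/eqP->//|]; exact: IH hp w.
Qed.

Lemma path_restrict (W : {set V}) z p x :
  path (eW W A) z p -> z != x -> x \notin p -> path (eW (W :\ x) A) z p.
Proof.
elim: p z => [|y p IH] z //= /andP[/and3P[hz hy ha] hp] hzx.
rewrite inE negb_or => /andP[hxy hxp].
apply/andP; split; first by rewrite /eW !inE hz hy ha hzx eq_sym hxy.
apply: IH => //; by rewrite eq_sym.
Qed.

Lemma connect_avoid (W : {set V}) z p x :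
  path (eW W A) z p -> z != x -> x \notin p -> connect (eW (W :\ x) A) z (last z p).
Proof.
move=> hp hz hx; apply: (path_connect (path_restrict hp hz hx)); exact: mem_last.
Qed.

Lemma eW_sub (W W' : {set V}) : W \subset W' -> subrel (eW W A) (eW W' A).
Proof. move=> sW x y /and3P[hx hy ha]; by rewrite /eW (subsetP sW _ hx) (subsetP sW _ hy) ha. Qed.

Lemma dpath_of_connect (W : {set V}) r v :
  r \in W -> connect (eW W A) r v -> exists p, dpath W A r v p /\ {subset p <= W}.
Proof.
move=> hr /connectP[p hp ->]; case: (shortenP hp) => p' hp' hu _.
exists p'; split; last exact: path_inW hp'.
by rewrite /dpath hr hp' eqxx hu.
Qed.

Definition Dom (s c y : V) :=
  forall p, path (arcrel A) s p -> last s p = y -> c \in s :: p.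

Definition Inv (s : V) (W : {set V}) (r : V) :=
  [/\ r \in W, s \in W -> r = s &
      forall a b, (a, b) \in A -> a \notin W -> b \in W -> b = r].

Lemma entry_lem (W : {set V}) z p :
  z \notin W -> path (arcrel A) z p -> last z p \in W ->
  exists a b, [/\ (a, b) \in A, a \notin W, b \in W & b \in p].
Proof.
elim: p z => [|y p IH] z /=; first by move=> /negPf->.
move=> hz /andP[hzy hp] hl.
case hyW: (y \in W).
  by exists z, y; rewrite mem_head hyW hz.
have [a [b [h1 h2 h3 h4]]] := IH y (negbT hyW) hp hl.
by exists a, b; rewrite inE h4 orbT.
Qed.

Lemma Inv_Dom s W r y : Inv s W r -> y \in W -> y != r -> Dom s r y.
Proof.
case=> hr hs hin hy hyr p hp hl.
apply/negPn/negP => hn.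
case hsW: (s \in W).
  by move: hn; rewrite (hs hsW) mem_head.
have [a [b [h1 h2 h3 h4]]] := entry_lem (negbT hsW) hp (ltac:(by rewrite hl)).
move: hn; by rewrite -(hin _ _ h1 h2 h3) inE h4 orbT.
Qed.

Lemma Dom_trans s c1 c2 c3 : Dom s c1 c2 -> Dom s c2 c3 -> Dom s c1 c3.
Proof.
move=> d12 d23 p hp hl.
have h := d23 p hp hl; move: hp hl; case/splitPl: h => p1 p2 hl1.
rewrite cat_path => /andP[hp1 _] _.
have := d12 p1 hp1 hl1; rewrite !inE mem_cat => /orP[->//|->]; by rewrite orbT.
Qed.

Lemma Dom_notin s c y p : Dom s c y -> c != y ->
  path (arcrel A) s p -> uniq (s :: p) -> last s p = c -> y \notin s :: p.
Proof.
move=> d hcy hp hu hl; apply/negP => hy.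
move: hp hu hl; case/splitPl: hy => p1 p2 hl1.
rewrite cat_path -cat_cons cat_uniq last_cat hl1 => /andP[hp1 _] /and3P[_ hdis _] hl2.
have hc1 := d p1 hp1 hl1.
have hc2 : c \in p2.
  have := mem_last y p2; rewrite hl2 inE (negPf hcy) //.
by move/hasPn: hdis => /(_ c hc2); rewrite hc1.
Qed.


Lemma internal_rcons (p : seq V) y : internal (rcons p y) = p.
Proof. by rewrite /internal size_rcons /= -cats1 take_size_cat. Qed.

Lemma last_neq_mem (r x : V) (p : seq V) : last r p = x -> x != r -> x \in p.
Proof. move=> hl hxr; have := mem_last r p; by rewrite hl inE (negPf hxr). Qed.

Section Level.
Variables (B : V -> {set V}) (X : V -> {set V}) (W : {set V}) (r : V).
Hypothesis hr : r \in W.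
Hypothesis hB : forall v, v \in B r <-> in_diblock W A r v.
Hypothesis hX : forall x v, v \in X x <-> in_X W A r (B r) x v.

Lemma rB : r \in B r.
Proof. by apply/hB; split=> //; left. Qed.

Lemma BW y : y \in B r -> y \in W.
Proof. by case/hB. Qed.

Lemma bi_lem x y : x != r -> y \in B r -> y != x -> connect (eW (W :\ x) A) r y.
Proof.
move=> hxr hy hyx.
have hrx : r \in W :\ x by rewrite !inE hr eq_sym hxr.
case: (eqVneq y r) => [->|hyr]; first exact: connect0.
case/hB: hy => hyW [hyr'|[he|[p [q [hp hq _ hdis]]]]].
- by move: hyr; rewrite hyr' eqxx.
- apply: connect1; case/and3P: he => _ _ ha.
  by rewrite /eW hrx !inE hyx hyW ha.
- case/and4P: hp => _ hpp /eqP hpl hpu.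
  case hxp: (x \in p).
    case/and4P: hq => _ hqp /eqP hql hqu.
    move: hpl hpu hpp hxp hdis; case/lastP: p => [//|p' l].
    rewrite last_rcons => -> _ _; rewrite mem_rcons inE eq_sym (negbTE hyx) /= => hxp'.
    rewrite internal_rcons => /hasPn /(_ x hxp') hxq.
    move: hql hqu hqp hxq; case/lastP: q => [/= hq|q' l'].
      by move: hyr; rewrite -hq eqxx.
    rewrite last_rcons => -> _ hqp; rewrite internal_rcons => hxq.
    have h1 : r != x by rewrite eq_sym.
    have h2 : x \notin rcons q' y by rewrite mem_rcons inE negb_or eq_sym hyx.
    have := connect_avoid hqp h1 h2.
    by rewrite last_rcons.
  rewrite -hpl; apply: connect_avoid hpp _ _; by rewrite ?hxp // eq_sym.
Qed.

Lemma nowalk x v : v \in X x -> ~ connect (eW (W :\ x) A) r v.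
Proof.
case/hX => hxB hxr hvW hvB hall hc.
have hrx : r \in W :\ x by rewrite !inE hr eq_sym hxr.
have [p [hp hsub]] := dpath_of_connect hrx hc.
have hp' : dpath W A r v p.
  case/and4P: hp => _ hpp hl hu.
  by rewrite /dpath hr (sub_path (eW_sub (subsetDl W [set x])) hpp) hl hu.
have hl := hall p hp'.
have := last_neq_mem hl hxr; rewrite mem_filter => /andP[_ /hsub].
by rewrite !inE eqxx.
Qed.

Lemma reach x a : x \in B r -> x != r -> a \in W -> a != x -> a \notin X x ->
  connect (eW (W :\ x) A) r a.
Proof.
move=> hxB hxr haW hax haX.
case haB: (a \in B r); first exact: bi_lem.
have hn : ~ in_X W A r (B r) x a by move=> h; move: haX; rewrite (proj2 (hX x a) h).
have : ~ (forall p, dpath W A r a p -> last r [seq y <- p | y \in B r] = x).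
  by move=> h; apply: hn; split=> //; rewrite haB.
move=> hna; have [p hp'] := not_all_ex_not _ _ hna.
have [hp hl] := imply_to_and _ _ hp'.
case/and4P: hp => _ hpp /eqP hpl hpu.
case hxp: (x \in p); last first.
  rewrite -hpl; apply: connect_avoid hpp _ _; by rewrite ?hxp // eq_sym.
move: hpp hpl hpu hl; case/splitPr: hxp => p1 p2.
rewrite cat_path last_cat /= => /andP[_ /andP[_ hp2]] hl2.
case/andP => _; rewrite cat_uniq => /and3P[_ _ /andP[hx2 _]].
rewrite filter_cat /= hxB last_cat /= => hl.
case hf: [seq y <- p2 | y \in B r] hl => [|y f]; first by move=> /(_ erefl).
move=> _.
have : y \in [seq y <- p2 | y \in B r] by rewrite hf mem_head.
rewrite mem_filter => /andP[hyB hyp2].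
have hyx : y != x by apply/negP => /eqP hyx; move: hx2; rewrite -hyx hyp2.
apply: (connect_trans (bi_lem hxr hyB hyx)).
move: hp2 hl2 hx2; case/splitPr: hyp2 => p3 p4.
rewrite cat_path last_cat /= => /andP[_ /andP[_ hp4]] <-.
rewrite mem_cat inE !negb_or => /andP[_ /andP[_ hx4]].
exact: connect_avoid hp4 hyx hx4.
Qed.

Lemma Inv_child s x : Inv s W r -> x \in B r -> x != r -> Inv s (x |: X x) x.
Proof.
case=> _ hs hin hxB hxr; split.
- by rewrite setU11.
- rewrite !inE => /orP[/eqP->//|hsX].
  case/hX: hsX => _ _ hsW hsB _.
  by move: hsB; rewrite -(hs hsW) rB.
- move=> a b hab; rewrite !inE negb_or => /andP[hax haX] /orP[/eqP//|hbX].
  exfalso.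
  case haW: (a \in W).
    apply: (nowalk hbX); apply: (connect_trans (reach hxB hxr haW hax haX)).
    apply: connect1; case/hX: (hbX) => _ _ hbW hbB _.
    have hbx : b != x by apply/negP => /eqP hbx; move: hbB; rewrite hbx hxB.
    by rewrite /eW !inE hax haW hbW hbx hab.
  case/hX: (hbX) => _ _ hbW hbB _.
  by move: hbB; rewrite (hin _ _ hab (negbT haW) hbW) rB.
Qed.
End Level.

Fixpoint cd_dom (par : V -> V) (B : V -> {set V}) s (W : {set V}) r (N : {set V})
  (H : cutdec A par B W r N) {struct H} :
  Inv s W r -> forall y, y \in N -> y != r -> Dom s (par y) y /\ par y != y.
Proof.
case: H => {}W {}r {}N X Nc hr hB hX hrec hN.
move=> hinv y; rewrite hN !inE => /orP[/eqP->|]; first by rewrite eqxx.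
case/bigcupP => x /and3P[hxB hxr hX0] hy hyr.
case: (hrec x hxB hxr hX0) => hpx hc.
case: (eqVneq y x) => [->|hyx].
  rewrite hpx; split; last by rewrite eq_sym.
  apply: (Inv_Dom hinv) => //; exact: (BW hB hxB).
exact: (cd_dom par B s _ _ _ hc (Inv_child hr hB hX hinv hxB hxr) y hy hyx).
Qed.
End Aux.

Lemma Dom_antisym (V : finType) (A : {set V * V}) s c1 c2 :
  (forall v, connect (arcrel A) s v) ->
  Dom A s c1 c2 -> c1 != c2 -> Dom A s c2 c1 -> False.
Proof.
move=> hr d12 hne d21.
case/connectP: (hr c1) => p hp hl.
move: hl; case: (shortenP hp) => p' hp' hu _ hl'.
have := Dom_notin d12 hne hp' hu (esym hl').
by rewrite (d21 p' hp' (esym hl')).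
Qed.

Lemma chain (V : finType) (A : {set V * V}) par B (N : {set V}) s x1 rest :
  cutdec A par B [set: V] s N -> path (child N par s) x1 rest ->
  (forall v, connect (arcrel A) s v) ->
  forall m n, m < n -> n < size (x1 :: rest) ->
  Dom A s (nth s (x1 :: rest) m) (nth s (x1 :: rest) n) /\
  nth s (x1 :: rest) m != nth s (x1 :: rest) n.
Proof.
move=> hcd hp hr.
have hinv : Inv A s [set: V] s by split => [|//|a b _]; rewrite ?inE.
have step l : l.+1 < size (x1 :: rest) ->
    Dom A s (nth s (x1 :: rest) l) (nth s (x1 :: rest) l.+1) /\
    nth s (x1 :: rest) l != nth s (x1 :: rest) l.+1.
  move=> hl; have := (pathP s hp) l hl; rewrite /= => /and3P[hyN hys /eqP hpy].
  have := cd_dom hcd hinv hyN hys; rewrite hpy //.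
move=> m n; elim: n => [//|n IH]; rewrite ltnS leq_eqVlt => /orP[/eqP <-|hmn] hn.
  exact: step.
have [d1 n1] := IH hmn (ltnW hn).
have [d2 n2] := step n hn.
split; first exact: Dom_trans d1 d2.
apply/negP => /eqP he.
rewrite -he in d2.
exact: Dom_antisym hr d1 n1 d2.
Qed.

Lemma in_branching_sub (V : finType) (A A' T : {set V * V}) t :
  A \subset A' -> in_branching A T t -> in_branching A' T t.
Proof. move=> sA [h1 h2 h3 h4]; split=> //; exact: subset_trans sA. Qed.

Lemma out_branching_sub (V : finType) (A A' T : {set V * V}) t :
  A \subset A' -> out_branching A T t -> out_branching A' T t.
Proof. move=> sA [h1 h2 h3 h4]; split=> //; exact: subset_trans sA. Qed.

Lemma path_T' (V : finType) (Tp : {set V * V}) a b z p :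
  path (arcrel Tp) z p -> a.2 \notin p -> path (arcrel (b |: (Tp :\ a))) z p.
Proof.
elim: p z => [|y p IH] z //= /andP[hzy hp]; rewrite inE negb_or => /andP[hy hn].
rewrite IH // andbT /arcrel !inE; apply/orP; right.
rewrite [_ \in Tp]hzy andbT.
by apply/negP => /eqP he; move: hy; rewrite -he eqxx.
Qed.

Lemma pred_mem (V : finType) (T : {set V * V}) s p x u :
  path (arcrel T) s p -> last s p = u -> u != s ->
  (forall c, c \in T -> c.2 = u -> c = (x, u)) -> x \in s :: p.
Proof.
case/lastP: p => [/= _ hsu|q l]; first by rewrite hsu eqxx.
rewrite last_rcons rcons_path => /andP[_ harc] hl _ H.
rewrite hl in harc; have [<-] := H _ harc erefl.
have := mem_last s q; rewrite !inE mem_rcons inE => /orP[->//|->]; by rewrite !orbT.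
Qed.

Lemma swap_lemma (V : finType) (A Tp Tm : {set V * V}) s k (xi xj u : V) :
  Dom A s xi xj -> xi != xj -> (xi, u) \in A -> (xi, u) \notin Tm -> (xj, u) \notin Tm ->
  out_branching A Tp s -> (xj, u) \in Tp -> k <= #|Tp :\: Tm| ->
  exists T', [/\ out_branching (A :\ (xj, u)) T' s & k <= #|T' :\: Tm|].
Proof.
set a := (xj, u); set b := (xi, u).
move=> hdom hne hbA hbTm haTm [hsub hin0 hin1 hconn] haTp hk.
have hba : b != a by apply/negP => /eqP [] /eqP; rewrite (negbTE hne).
have hus : u != s.
  apply/negP => /eqP hus; move/eqP: hin0; rewrite cards_eq0 => /eqP/setP/(_ a).
  by rewrite !inE haTp /= hus eqxx.
have hSu : [set c in Tp | c.2 == u] = [set a].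
  have := hin1 u hus; move/eqP/cards1P => [z hz].
  have : a \in [set c in Tp | c.2 == u] by rewrite inE haTp eqxx.
  by rewrite hz inE => /eqP <-.
have uniqa c : c \in Tp -> c.2 = u -> c = a.
  move=> hc hc2; have : c \in [set c in Tp | c.2 == u] by rewrite inE hc hc2 eqxx.
  by rewrite hSu inE => /eqP.
have hbTp : b \notin Tp by apply/negP => /uniqa /(_ erefl) /eqP; rewrite (negbTE hba).
set T' := b |: (Tp :\ a).
exists T'; split.
- split.
  + apply/subsetP => c; rewrite !inE => /orP[/eqP ->|/andP[hca hc]].
      by rewrite hba hbA.
    by rewrite hca (subsetP hsub _ hc).
  + have -> : [set c in T' | c.2 == s] = [set c in Tp | c.2 == s]; last by [].
    apply/setP => c; rewrite !inE; case: (eqVneq c b) => [->|hcb] /=.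
      by rewrite (negbTE hus) andbF.
    case: (eqVneq c a) => [->|hca] //=.
    by rewrite haTp /= (negbTE hus).
  + move=> v hv; case: (eqVneq v u) => [->|hvu].
      have -> : [set c in T' | c.2 == u] = [set b]; last by rewrite cards1.
      apply/setP => c; rewrite !inE; case: (eqVneq c b) => [->|hcb] //=.
by rewrite eqxx.       apply/negbTE/negP => /andP[/andP[hca hc] /eqP hc2].
      by move: hca; rewrite (uniqa c hc hc2) eqxx.
    rewrite -(hin1 v hv); apply: eq_card => c.
    rewrite !inE; case: (eqVneq c b) => [->|hcb] /=.
      by rewrite eq_sym (negbTE hvu) andbF.
    case: (eqVneq c a) => [->|hca] //=.
    by rewrite haTp /= eq_sym (negbTE hvu).
  + have hTA : subrel (arcrel Tp) (arcrel A) by move=> x y; exact: (subsetP hsub).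
    have hcu : connect (arcrel T') s u.
      case/connectP: (hconn xi) => p hp hl.
      move: hl; case: (shortenP hp) => p' hp' hu _ hl.
      have hpA := sub_path hTA hp'.
      have hup : u \notin p'.
        apply/negP => hup.
        have hup' : u \in s :: p' by rewrite inE hup orbT.
        have hxj : xj \notin s :: p' := Dom_notin hdom hne hpA hu (esym hl).
        move: hp' hxj; case/splitPl: hup' => p1 p2 hl1.
        rewrite cat_path => /andP[hp1 _].
        have := pred_mem hp1 hl1 hus uniqa.
        by rewrite -cat_cons mem_cat => ->.
      apply: (connect_trans _ (connect1 (_ : arcrel T' xi u))).
        rewrite hl; exact: (path_connect (@path_T' _ _ a b _ _ hp' hup) (mem_last _ _)).
      by rewrite /arcrel !inE eqxx.
    move=> v; case/connectP: (hconn v) => p hp hl.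
    move: hl; case: (shortenP hp) => p' hp' hu _ ->.
    case hup: (u \in p'); last first.
      exact: (path_connect (@path_T' _ _ a b _ _ hp' (negbT hup)) (mem_last _ _)).
    move: hp' hu; case/splitPr: hup => p1 p2.
    rewrite cat_path /= => /and3P[_ _ hp2].
    case/andP => _; rewrite cat_uniq => /and3P[_ _ /andP[hu2 _]].
    apply: (connect_trans hcu); rewrite last_cat /=.
    exact: (path_connect (@path_T' _ _ a b _ _ hp2 hu2) (mem_last _ _)).
- have e1 : Tp :\: Tm = a |: ((Tp :\ a) :\: Tm).
    apply/setP => c; rewrite !inE; case: (eqVneq c a) => [->|hca] /=.
      by rewrite haTm haTp.
    by rewrite andbC.
  have e2 : T' :\: Tm = b |: ((Tp :\ a) :\: Tm).
    apply/setP => c; rewrite !inE; case: (eqVneq c b) => [->|hcb] /=.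
      by rewrite hbTm.
    by [].
  move: hk; rewrite e1 e2 !cardsU1 !inE eqxx /= andbF (negbTE hbTp) !andbF.
  done.
Qed.

Theorem lemma15 (V : finType) (A : {set V * V}) (s t : V) (k : nat)
    (N : {set V}) (par : V -> V) (B : V -> {set V})
    (x1 : V) (rest : seq V) (i j : nat) (u : V) :
  loopless A ->
  reduced A s t ->
  cutdec A par B [set: V] s N ->
  degenerate_path N par B s x1 rest ->
  (i < j)%N -> (j < size (x1 :: rest))%N ->
  in_Aplus A N par B s x1 rest (nth s (x1 :: rest) i, u) ->
  in_Rt A t (nth s (x1 :: rest) i, u) ->
  in_Aplus A N par B s x1 rest (nth s (x1 :: rest) j, u) ->
  in_Rt A t (nth s (x1 :: rest) j, u) ->
  (positive A s t k <-> positive (A :\ (nth s (x1 :: rest) j, u)) s t k).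
Proof.
move=> hll hred hcd [hpath _] hij hj hAi hRi hAj hRj.
set xi := nth s (x1 :: rest) i; set xj := nth s (x1 :: rest) j.
have hreach : forall v, connect (arcrel A) s v.
  case: hred => [[T [hsub _ _ hc]] _ _] v.
  case/connectP: (hc v) => p hp ->.
  have hTA : subrel (arcrel T) (arcrel A) by move=> x y; exact: (subsetP hsub).
  exact: (path_connect (sub_path hTA hp) (mem_last _ _)).
have [hdom hne] := chain hcd hpath hreach hij hj.
have hbA : (xi, u) \in A by case: hAi.
have notin (x : V) T : in_Rt A t (x, u) -> in_branching A T t -> (x, u) \notin T.
  by case=> _ h hT; apply/negP => hin; apply: h; exists T.
split.
- case=> Tp [Tm [hTp hTm hk]].
  have haTm := notin _ _ hRj hTm.
  have hbTm := notin _ _ hRi hTm.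
  have hTm' : in_branching (A :\ (xj, u)) Tm t.
    case: hTm => h1 h2 h3 h4; split=> //; apply/subsetP => c hc.
    rewrite !inE (subsetP h1 _ hc) andbT; apply/negP => /eqP hc'.
    by move: haTm; rewrite -hc' hc.
  case haTp: ((xj, u) \in Tp).
    have [T' [hT' hk']] := swap_lemma hdom hne hbA hbTm haTm hTp haTp hk.
    by exists T', Tm.
  exists Tp, Tm; split=> //.
  case: hTp => h1 h2 h3 h4; split=> //; apply/subsetP => c hc.
  rewrite !inE (subsetP h1 _ hc) andbT; apply/negP => /eqP hc'.
  by move: haTp; rewrite -hc' hc.
- case=> Tp [Tm [hTp hTm hk]]; exists Tp, Tm; split=> //.
  + exact: out_branching_sub (subsetDl _ _) hTp.
  + exact: in_branching_sub (subsetDl _ _) hTm.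
Qed.
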